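(* Let $f:[0,1]\to[0,1]$ be a surjective continuous function. If $f$ admits a periodic point of period $m$ for some $m>2$, then $f$ admits a splitting sequence.
   Context: A point $x$ is periodic of period $m$ if $f^m(x)=x$ and $f^i(x)\neq x$ for $0<i<m$. A sequence $(T_n)_{n\in\mathbb N}$ of closed intervals $T_n\subsetneq[0,1]$ (possibly degenerate) is tight if $f(T_{n+1})=T_n$ for every $n$ and $T_n$ is nondegenerate for all sufficiently large $n$. A tight sequence $(T_n)$, $T_n=[l_n,r_n]$, is a splitting sequence admitted by $f$ if there are an infinite set $N\subseteq\mathbb N$ and nondegenerate closed intervals $S_n\subseteq[0,1]$ ($n\in N$) with $S_n\cap T_n\subseteq\{l_n,r_n\}$ and $f(S_n)=f(T_n)$ for all $n\in N$. *)

(* Defs.v *)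
From Stdlib Require Import Reals.
Open Scope R_scope.

Definition I01 (x : R) : Prop := 0 <= x <= 1.

Definition cont_on01 (f : R -> R) : Prop :=
  forall x, I01 x -> limit1_in f I01 (f x) x.

Definition maps01 (f : R -> R) : Prop := forall x, I01 x -> I01 (f x).

Definition onto01 (f : R -> R) : Prop :=
  forall y, I01 y -> exists x, I01 x /\ f x = y.

Definition periodic_of_period (f : R -> R) (m : nat) (x : R) : Prop :=
  I01 x /\ Nat.iter m f x = x /\
  (forall i : nat, (0 < i < m)%nat -> Nat.iter i f x <> x).

Definition cint (l r : R) (x : R) : Prop := l <= x <= r.

Definition image_eq (f : R -> R) (a b c d : R) : Prop :=
  forall y, cint c d y <-> exists x, cint a b x /\ f x = y.

Definition proper_subinterval (l r : R) : Prop :=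
  0 <= l /\ l <= r /\ r <= 1 /\ ~ (l = 0 /\ r = 1).

Definition tight (f : R -> R) (l r : nat -> R) : Prop :=
  (forall n, proper_subinterval (l n) (r n)) /\
  (forall n, image_eq f (l (S n)) (r (S n)) (l n) (r n)) /\
  (exists N, forall n, (N <= n)%nat -> l n < r n).

Definition splitting_sequence (f : R -> R) (l r : nat -> R) : Prop :=
  tight f l r /\
  exists (Nset : nat -> Prop) (a b : nat -> R),
    (forall k, exists n, (k <= n)%nat /\ Nset n) /\
    (forall n, Nset n ->
       0 <= a n /\ a n < b n /\ b n <= 1 /\
       (forall x, cint (a n) (b n) x -> cint (l n) (r n) x -> x = l n \/ x = r n) /\
       (forall y, (exists x, cint (a n) (b n) x /\ f x = y) <->
                  (exists x, cint (l n) (r n) x /\ f x = y))).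

Definition admits_splitting_sequence (f : R -> R) : Prop :=
  exists l r : nat -> R, splitting_sequence f l r.

(* Main.v *)
Require Import Defs.
From Stdlib Require Import Reals Lra Lia ClassicalEpsilon.
Open Scope R_scope.

Definition clamp (x : R) : R := Rmax 0 (Rmin 1 x).

Ltac dest_minmax := unfold Rmax, Rmin in *;
  repeat match goal with |- context [Rle_dec ?a ?b] => destruct (Rle_dec a b)
                       | H : context [Rle_dec ?a ?b] |- _ => destruct (Rle_dec a b) end;
  repeat match goal with H: ~ _ <= _ |- _ => apply Rnot_le_lt in H end.

Lemma clamp_I01 x : I01 (clamp x).
Proof. unfold clamp, I01; dest_minmax; lra. Qed.

Lemma clamp_id x : I01 x -> clamp x = x.
Proof. unfold clamp, I01; intros; dest_minmax; lra. Qed.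

Lemma clamp_lip x y : Rabs (clamp y - clamp x) <= Rabs (y - x).
Proof. unfold clamp; dest_minmax; unfold Rabs;
  repeat match goal with |- context [Rcase_abs ?a] => destruct (Rcase_abs a) end; lra. Qed.

Lemma g_cont f : cont_on01 f -> continuity (fun x => f (clamp x)).
Proof.
  intros Hc x eps Heps.
  destruct (Hc (clamp x) (clamp_I01 x) eps Heps) as [alp [Halp H]].
  exists alp; split; auto. intros y [_ Hy].
  apply H. split. apply clamp_I01. simpl in *. unfold R_dist in *.
  eapply Rle_lt_trans. apply clamp_lip. exact Hy.
Qed.

Lemma cont_eps g z : continuity g -> forall eps, eps > 0 ->
  exists del, del > 0 /\ forall t, Rabs (t - z) < del -> Rabs (g t - g z) < eps.
Proof.
  intros Hg eps He. destruct (Hg z eps He) as [del [Hd H]].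
  exists del; split; auto. intros t Ht.
  destruct (Req_dec t z) as [->|Hne].
  - unfold Rminus; rewrite Rplus_opp_r, Rabs_R0; lra.
  - apply (H t). split. split. constructor. auto. exact Ht.
Qed.

Lemma ivt2 (g : R -> R) x1 x2 w : continuity g -> g x1 <= w <= g x2 ->
  exists x, Rmin x1 x2 <= x <= Rmax x1 x2 /\ g x = w.
Proof.
  intros Hg Hw.
  assert (Hc : continuity (fun t => g t - w)).
  { apply (continuity_minus g (fun _ => w)); auto. apply continuity_const. intros a b; reflexivity. }
  destruct (Rle_dec x1 x2).
  - destruct (IVT_cor (fun t => g t - w) x1 x2 Hc r) as [x [Hx Hx']].
    + nra.
    + exists x. rewrite Rmin_left, Rmax_right by lra. split; auto. lra.
  - destruct (IVT_cor (fun t => g t - w) x2 x1 Hc) as [x [Hx Hx']]. lra. nra.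
    exists x. rewrite Rmin_right, Rmax_left by lra. split; auto. lra.
Qed.

Lemma first_hit (g : R -> R) x y d : continuity g -> x <= y -> g x <= d -> d <= g y ->
  exists z, x <= z <= y /\ g z = d /\ forall t, x <= t < z -> g t < d.
Proof.
  intros Hg Hxy Hx Hy.
  destruct (Req_dec (g x) d) as [E|NE].
  { exists x. split. lra. split. auto. intros; lra. }
  set (E := fun t => x <= t <= y /\ forall s, x <= s <= t -> g s < d).
  assert (Eb : bound E). { exists y. intros t [Ht _]. lra. }
  assert (Ex : E x). { split. lra. intros s Hs. replace s with x by lra. lra. }
  destruct (completeness E Eb (ex_intro _ x Ex)) as [z [Hub Hlub]].
  assert (Hxz : x <= z) by (apply Hub; auto).
  assert (Hzy : z <= y). { apply Hlub. intros t [Ht _]. lra. }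
  assert (key : forall s, x <= s < z -> g s < d).
  { intros s Hs. destruct (Rlt_or_le (g s) d) as [|Hge]; auto.
    exfalso. assert (z <= s); [|lra]. apply Hlub. intros t [Ht Ht'].
    destruct (Rle_or_lt t s); auto. specialize (Ht' s). lra. }
  exists z. split. lra. split; [|exact key].
  destruct (Rtotal_order (g z) d) as [Hlt|[Heq|Hgt]]; auto; exfalso.
  - destruct (cont_eps g z Hg (d - g z)) as [del [Hd Hdel]]. lra.
    assert (z < y). { destruct (Req_dec z y); [subst; lra| lra]. }
    set (t := Rmin y (z + del/2)).
    assert (Et : E t).
    { split. unfold t; dest_minmax; lra.
      intros s Hs. destruct (Rlt_or_le s z). apply key; lra.
      assert (Rabs (s - z) < del). { unfold t in Hs. rewrite Rabs_right.
        dest_minmax; lra. lra. }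
      specialize (Hdel s H1). apply Rabs_def2 in Hdel. lra. }
    assert (t <= z) by (apply Hub; auto). unfold t in H0. dest_minmax; lra.
  - destruct (cont_eps g z Hg (g z - d)) as [del [Hd Hdel]]. lra.
    assert (x < z). { destruct (Req_dec x z); [subst; lra | lra]. }
    set (t := Rmax x (z - del/2)).
    assert (Hk : g t < d) by (apply key; unfold t; dest_minmax; lra).
    assert (Rabs (t - z) < del). { unfold t. rewrite Rabs_left1. dest_minmax; lra. dest_minmax; lra. }
    specialize (Hdel t H0). apply Rabs_def2 in Hdel. lra.
Qed.

Lemma last_hit (g : R -> R) x z c : continuity g -> x <= z -> g x <= c -> c <= g z ->
  exists w, x <= w <= z /\ g w = c /\ forall t, w < t <= z -> c < g t.
Proof.
  intros Hg Hxz H1 H2.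
  set (h := fun t => - g (- t)).
  assert (Hh : continuity h).
  { unfold h. apply (continuity_opp (fun t => g (- t))).
    apply (continuity_comp (fun t => - t) g); auto.
    apply (continuity_opp (fun t => t)). apply derivable_continuous, derivable_id. }
  destruct (first_hit h (-z) (-x) (-c) Hh) as [z' [Hz1 [Hz2 Hz3]]]; try lra;
    unfold h; rewrite ?Ropp_involutive; try lra.
  exists (- z'). split. lra. split. unfold h in Hz2. lra.
  intros t Ht. specialize (Hz3 (-t)). unfold h in Hz3. rewrite Ropp_involutive in Hz3.
  assert (- g t < - c) by (apply Hz3; lra). lra.
Qed.

Lemma exact_g_le g a b c d x y : continuity g -> a <= x -> x <= y -> y <= b ->
  g x = c -> g y = d -> c <= d ->
  exists a' b', a <= a' <= b' /\ b' <= b /\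
    forall w, c <= w <= d <-> exists t, a' <= t <= b' /\ g t = w.
Proof.
  intros Hg H1 H2 H3 Hc Hd Hcd.
  destruct (first_hit g x y d Hg H2) as [z [Hz1 [Hz2 Hz3]]]; try lra.
  destruct (last_hit g x z c Hg) as [w [Hw1 [Hw2 Hw3]]]; try lra.
  exists w, z. split. lra. split. lra. intros w0. split.
  - intros Hw0. destruct (ivt2 g w z w0 Hg) as [t [Ht Ht']]. lra.
    rewrite Rmin_left, Rmax_right in Ht by lra. exists t; split; auto.
  - intros [t [Ht <-]]. split.
    + destruct (Req_dec t w) as [->|]. lra. assert (c < g t) by (apply Hw3; lra). lra.
    + destruct (Req_dec t z) as [->|]. lra. assert (g t < d) by (apply Hz3; lra). lra.
Qed.

Lemma exact_g g a b c d x y : continuity g -> a <= x <= b -> a <= y <= b ->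
  g x = c -> g y = d -> c <= d ->
  exists a' b', a <= a' <= b' /\ b' <= b /\
    forall w, c <= w <= d <-> exists t, a' <= t <= b' /\ g t = w.
Proof.
  intros Hg Hx Hy Hc Hd Hcd.
  destruct (Rle_dec x y).
  - apply (exact_g_le g a b c d x y); auto; lra.
  - set (h := fun t => g (- t)).
    assert (Hh : continuity h).
    { unfold h. apply (continuity_comp (fun t => - t) g); auto.
      apply (continuity_opp (fun t => t)). apply derivable_continuous, derivable_id. }
    assert (E1 : h (-x) = c) by (unfold h; rewrite Ropp_involutive; auto).
    assert (E2 : h (-y) = d) by (unfold h; rewrite Ropp_involutive; auto).
    destruct (exact_g_le h (-b) (-a) c d (-x) (-y) Hh) as [a1 [b1 [Hab1 [Hb1 Him]]]];
      try lra; auto.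
    exists (-b1), (-a1). split. lra. split. lra. intros w. rewrite Him. split.
    + intros [t [Ht Ht']]. exists (-t). split. lra. exact Ht'.
    + intros [t [Ht Ht']]. exists (-t). split. lra. unfold h. rewrite Ropp_involutive. exact Ht'.
Qed.

Lemma exact_f f a b c d : cont_on01 f -> 0 <= a -> a <= b -> b <= 1 -> c < d ->
  (forall w, c <= w <= d -> exists x, a <= x <= b /\ f x = w) ->
  exists a' b', a <= a' /\ a' < b' /\ b' <= b /\ image_eq f a' b' c d.
Proof.
  intros Hf H0 Hab H1 Hcd Hcov.
  destruct (Hcov c) as [x [Hx Hfx]]. lra.
  destruct (Hcov d) as [y [Hy Hfy]]. lra.
  set (g := fun t => f (clamp t)).
  assert (Hg : continuity g) by apply (g_cont f Hf).
  assert (Hgf : forall t, 0 <= t <= 1 -> g t = f t).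
  { intros t Ht. unfold g. rewrite clamp_id; auto. }
  destruct (exact_g g a b c d x y Hg Hx Hy) as [a' [b' [Hab' [Hb' Him]]]];
    try (rewrite Hgf; auto; lra); try lra.
  assert (Hne : a' <> b').
  { intros <-. destruct (proj1 (Him c)) as [t1 [Ht1 Ht1']]. lra.
    destruct (proj1 (Him d)) as [t2 [Ht2 Ht2']]. lra.
    replace t1 with a' in * by lra. replace t2 with a' in * by lra. lra. }
  exists a', b'. split. lra. split. lra. split. lra.
  intros w. unfold cint. rewrite Him. split.
  - intros [t [Ht Ht']]. exists t. split. auto. rewrite <- Hgf by lra. auto.
  - intros [t [Ht Ht']]. exists t. split. auto. rewrite Hgf by lra. auto.
Qed.

Lemma ivt_f f x1 x2 w : cont_on01 f -> I01 x1 -> I01 x2 -> f x1 <= w <= f x2 ->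
  exists x, Rmin x1 x2 <= x <= Rmax x1 x2 /\ f x = w.
Proof.
  intros Hf H1 H2 Hw.
  set (g := fun t => f (clamp t)).
  assert (Hg : continuity g) by apply (g_cont f Hf).
  destruct (ivt2 g x1 x2 w Hg) as [x [Hx Hx']].
  { unfold g. rewrite !clamp_id; auto. }
  exists x. split. auto. unfold g in Hx'. rewrite clamp_id in Hx'. auto.
  unfold I01 in *. unfold Rmin, Rmax in Hx. destruct (Rle_dec x1 x2); lra.
Qed.

Lemma core f (y z : nat -> R) (P Q e g' : R) (good : nat -> Prop) :
  cont_on01 f -> maps01 f -> onto01 f ->
  (forall n, f (y (S n)) = y n) -> (forall n, f (z (S n)) = z n) ->
  (forall n, y n <> z n) ->
  0 <= P -> Q <= 1 ->
  (forall n, P <= y n <= Q) -> (forall n, P <= z n <= Q) ->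
  ~ (Rmin (y 0%nat) (z 0%nat) = 0 /\ Rmax (y 0%nat) (z 0%nat) = 1) ->
  0 <= e -> e < g' -> g' <= 1 ->
  (forall w, P <= w <= Q -> exists x, e <= x <= g' /\ f x = w) ->
  (forall k, exists n, (k <= n)%nat /\ good n) ->
  (forall n, good n -> (1 <= n)%nat /\ forall x, e <= x <= g' ->
      Rmin (y n) (z n) <= x <= Rmax (y n) (z n) ->
      x = Rmin (y n) (z n) \/ x = Rmax (y n) (z n)) ->
  admits_splitting_sequence f.
Proof.
  intros Hc Hm Ho Hy Hz Hyz HP HQ HyB HzB H0 He Heg Hg' Hcov Hinf Hgood.
  set (lo := fun n => Rmin (y n) (z n)).
  set (hi := fun n => Rmax (y n) (z n)).
  assert (Hlohi : forall n, lo n < hi n).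
  { intros n. unfold lo, hi, Rmin, Rmax. specialize (Hyz n). destruct (Rle_dec (y n) (z n)); lra. }
  assert (HloP : forall n, P <= lo n).
  { intros n. unfold lo, Rmin. specialize (HyB n); specialize (HzB n). destruct (Rle_dec (y n) (z n)); lra. }
  assert (HhiQ : forall n, hi n <= Q).
  { intros n. unfold hi, Rmax. specialize (HyB n); specialize (HzB n). destruct (Rle_dec (y n) (z n)); lra. }
  set (stepP := fun n (I J : R * R) => lo (S n) <= fst J /\ fst J < snd J /\ snd J <= hi (S n) /\
                   image_eq f (fst J) (snd J) (fst I) (snd I)).
  set (step := fun n I => epsilon (inhabits (0,0)) (stepP n I)).
  set (T := fix T n := match n with O => (lo O, hi O) | S n' => step n' (T n') end).
  assert (Hstep : forall n, lo n <= fst (T n) -> fst (T n) < snd (T n) -> snd (T n) <= hi n ->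
                      stepP n (T n) (T (S n))).
  { intros n H1 H2 H3. simpl T. unfold step. apply epsilon_spec.
    destruct (exact_f f (lo (S n)) (hi (S n)) (fst (T n)) (snd (T n)) Hc) as [a' [b' Hab]].
    - pose proof (HloP (S n)); lra.
    - pose proof (Hlohi (S n)); lra.
    - pose proof (HhiQ (S n)); lra.
    - auto.
    - intros w Hw.
      assert (I1 : I01 (y (S n))) by (pose proof (HyB (S n)); unfold I01; lra).
      assert (I2 : I01 (z (S n))) by (pose proof (HzB (S n)); unfold I01; lra).
      destruct (Rle_dec (y n) (z n)).
      + destruct (ivt_f f (y (S n)) (z (S n)) w Hc I1 I2) as [x [Hx Hx']].
        rewrite Hy, Hz. unfold lo, hi in *. rewrite Rmin_left, Rmax_right in * by lra. lra.
        exists x. split; auto.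
      + destruct (ivt_f f (z (S n)) (y (S n)) w Hc I2 I1) as [x [Hx Hx']].
        rewrite Hy, Hz. unfold lo, hi in *. rewrite Rmin_right, Rmax_left in * by lra. lra.
        exists x. unfold lo, hi. rewrite Rmin_comm, Rmax_comm. split; auto.
    - exists (a', b'). unfold stepP. simpl. tauto. }
  assert (Hinv : forall n, lo n <= fst (T n) /\ fst (T n) < snd (T n) /\ snd (T n) <= hi n).
  { induction n as [|n IH].
    - simpl. pose proof (Hlohi O). lra.
    - destruct IH as [A1 [A2 A3]]. destruct (Hstep n A1 A2 A3) as [B1 [B2 [B3 _]]]. auto. }
  assert (Himg : forall n, image_eq f (fst (T (S n))) (snd (T (S n))) (fst (T n)) (snd (T n))).
  { intros n. destruct (Hinv n) as [A1 [A2 A3]]. apply (Hstep n A1 A2 A3). }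
  set (SP := fun n (J : R * R) => e <= fst J /\ fst J < snd J /\ snd J <= g' /\
               image_eq f (fst J) (snd J) (fst (T (pred n))) (snd (T (pred n)))).
  set (Sn := fun n => epsilon (inhabits (0,0)) (SP n)).
  assert (HS : forall n, SP n (Sn n)).
  { intros n. unfold Sn. apply epsilon_spec.
    destruct (Hinv (pred n)) as [A1 [A2 A3]].
    destruct (exact_f f e g' (fst (T (pred n))) (snd (T (pred n))) Hc) as [a' [b' Hab]];
      try lra; auto.
    - intros w Hw. apply Hcov. pose proof (HloP (pred n)); pose proof (HhiQ (pred n)). lra.
    - exists (a', b'). unfold SP. simpl. tauto. }
  exists (fun n => fst (T n)), (fun n => snd (T n)). split; [split; [|split]|].
  - intros n. destruct (Hinv n) as [A1 [A2 A3]].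
    pose proof (HloP n); pose proof (HhiQ n).
    unfold proper_subinterval. split. lra. split. lra. split. lra.
    induction n as [|n IH].
    + simpl. exact H0.
    + intros [E1 E2]. apply IH.
      * apply Hinv.
      * apply Hinv.
      * apply Hinv.
      * apply HloP.
      * apply HhiQ.
      * specialize (Himg n). rewrite E1, E2 in Himg.
        destruct (Hinv n) as [B1 [B2 B3]].
        assert (U1 : cint (fst (T n)) (snd (T n)) (fst (T n))) by (unfold cint; lra).
        assert (U2 : cint (fst (T n)) (snd (T n)) (snd (T n))) by (unfold cint; lra).
        apply Himg in U1. apply Himg in U2.
        destruct U1 as [x1 [Hx1 Hf1]]. destruct U2 as [x2 [Hx2 Hf2]].
        pose proof (Hm x1 Hx1). pose proof (Hm x2 Hx2).
        destruct (Ho 0) as [x3 [Hx3 Hf3]]. unfold I01; lra.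
        destruct (Ho 1) as [x4 [Hx4 Hf4]]. unfold I01; lra.
        assert (V3 : cint (fst (T n)) (snd (T n)) 0) by (apply Himg; exists x3; auto).
        assert (V4 : cint (fst (T n)) (snd (T n)) 1) by (apply Himg; exists x4; auto).
        unfold cint, I01 in *. split; lra.
  - exact Himg.
  - exists O. intros n _. apply Hinv.
  - exists good, (fun n => fst (Sn n)), (fun n => snd (Sn n)). split. exact Hinf.
    intros n Hn. destruct (Hgood n Hn) as [Hn1 Hint].
    destruct (HS n) as [C1 [C2 [C3 C4]]].
    split. lra. split. lra. split. lra. split.
    + intros x Hx1 Hx2. unfold cint in *. destruct (Hinv n) as [A1 [A2 A3]].
      destruct (Hint x) as [E|E]. lra. fold (lo n) (hi n). lra.
      * left. fold (lo n) in E. lra.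
      * right. fold (hi n) in E. lra.
    + intros w. destruct n as [|n']. lia. change (pred (S n')) with n' in C4.
      specialize (C4 w). specialize (Himg n' w). tauto.
Qed.

Lemma iter_period (f : R -> R) m u : Nat.iter m f u = u ->
  forall j k, Nat.iter (k + m * j) f u = Nat.iter k f u.
Proof.
  intros Hu j. induction j as [|j IH]; intros k.
  - rewrite Nat.mul_0_r, Nat.add_0_r. reflexivity.
  - replace (k + m * S j)%nat with ((k + m * j) + m)%nat by lia.
    rewrite Nat.iter_add, Hu. apply IH.
Qed.

Lemma inst f m u v P Q e g' : cont_on01 f -> maps01 f -> onto01 f -> (1 <= m)%nat ->
  Nat.iter m f u = u -> Nat.iter m f v = v -> u <> v ->
  0 <= P -> Q <= 1 ->
  (forall j, P <= Nat.iter j f u <= Q) -> (forall j, P <= Nat.iter j f v <= Q) ->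
  ~ (Rmin (f u) (f v) = 0 /\ Rmax (f u) (f v) = 1) ->
  0 <= e -> e < g' -> g' <= 1 ->
  (forall w, P <= w <= Q -> exists x, e <= x <= g' /\ f x = w) ->
  (forall x, e <= x <= g' -> Rmin u v <= x <= Rmax u v -> x = Rmin u v \/ x = Rmax u v) ->
  admits_splitting_sequence f.
Proof.
  intros Hc Hm Ho Hm1 Hu Hv Huv HP HQ HuB HvB H0 He Heg Hg' Hcov Hint.
  destruct m as [|m']. lia.
  set (y := fun n => Nat.iter (m' * n + 1) f u).
  set (z := fun n => Nat.iter (m' * n + 1) f v).
  assert (Hper : forall w, Nat.iter (S m') f w = w -> forall n, f (Nat.iter (m' * S n + 1) f w) = Nat.iter (m' * n + 1) f w).
  { intros w Hw n. change (f (Nat.iter (m' * S n + 1) f w)) with (Nat.iter (S (m' * S n + 1)) f w).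
    replace (S (m' * S n + 1)) with ((m' * n + 1) + S m' * 1)%nat by lia.
    apply iter_period; auto. }
  assert (Hback : forall w n, Nat.iter (S m') f w = w -> Nat.iter (m' * (m' * n + 1)) f (Nat.iter (m' * n + 1) f w) = w).
  { intros w n Hw. rewrite <- Nat.iter_add.
    replace (m' * (m' * n + 1) + (m' * n + 1))%nat with (0 + S m' * (m' * n + 1))%nat by lia.
    rewrite iter_period; auto. }
  assert (Y0 : y 0%nat = f u) by (unfold y; rewrite Nat.mul_0_r; reflexivity).
  assert (Z0 : z 0%nat = f v) by (unfold z; rewrite Nat.mul_0_r; reflexivity).
  assert (A1 : forall n, f (y (S n)) = y n) by (intros n; apply Hper; auto).
  assert (A2 : forall n, f (z (S n)) = z n) by (intros n; apply Hper; auto).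
  assert (A3 : forall n, y n <> z n).
  { intros n E. apply Huv. rewrite <- (Hback u n Hu), <- (Hback v n Hv). unfold y, z in E. rewrite E. reflexivity. }
  assert (A4 : forall n, P <= y n <= Q) by (intros n; apply HuB).
  assert (A5 : forall n, P <= z n <= Q) by (intros n; apply HvB).
  assert (A6 : ~ (Rmin (y 0%nat) (z 0%nat) = 0 /\ Rmax (y 0%nat) (z 0%nat) = 1)) by (rewrite Y0, Z0; exact H0).
  assert (A7 : forall k, exists n, (k <= n)%nat /\ (fun n => exists j, n = (1 + S m' * j)%nat) n).
  { intros k. exists (1 + S m' * k)%nat. split. lia. eauto. }
  apply (core f y z P Q e g' (fun n => exists j, n = (1 + S m' * j)%nat) Hc Hm Ho A1 A2 A3 HP HQ A4 A5 A6 He Heg Hg' Hcov A7).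
  intros n [j ->]. split. lia.
  assert (E : forall w, Nat.iter (S m') f w = w -> Nat.iter (m' * (1 + S m' * j) + 1) f w = w).
  { intros w Hw. replace (m' * (1 + S m' * j) + 1)%nat with (0 + S m' * (1 + m' * j))%nat by lia.
    rewrite iter_period; auto. }
  unfold y, z. rewrite (E u Hu), (E v Hv). exact Hint.
Qed.

Lemma min_index (h : nat -> R) n : exists i, (i <= n)%nat /\ forall j, (j <= n)%nat -> h i <= h j.
Proof.
  induction n as [|n [i [Hi Hmin]]].
  - exists O. split. lia. intros j Hj. replace j with O by lia. lra.
  - destruct (Rle_dec (h (S n)) (h i)).
    + exists (S n). split. lia. intros j Hj. destruct (Nat.eq_dec j (S n)) as [->|]. lra.
      specialize (Hmin j ltac:(lia)). lra.
    + exists i. split. lia. intros j Hj. destruct (Nat.eq_dec j (S n)) as [->|]. lra.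
      apply Hmin. lia.
Qed.

Lemma iter_maps f x i : maps01 f -> I01 x -> I01 (Nat.iter i f x).
Proof. intros Hm Hx. induction i; simpl; auto. Qed.

Theorem lemma3p8 (f : R -> R) :
  cont_on01 f -> maps01 f -> onto01 f ->
  (exists (m : nat) (x : R), (2 < m)%nat /\ periodic_of_period f m x) ->
  admits_splitting_sequence f.
Proof.
  intros Hc Hm Ho [m [x0 [Hm2 [HI [Hper Hmin]]]]].
  set (o := fun i => Nat.iter i f x0).
  assert (Hadd : forall j i, Nat.iter j f (o i) = o (j + i)%nat).
  { intros j i. unfold o. rewrite Nat.iter_add. reflexivity. }
  assert (Hmod : forall j, o j = o (j mod m)).
  { intros j. unfold o.
    assert (E : (j mod m + m * (j / m) = j)%nat) by (pose proof (Nat.div_mod j m ltac:(lia)); lia).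
    transitivity (Nat.iter (j mod m + m * (j / m)) f x0). now rewrite E. apply iter_period; auto. }
  destruct (min_index o (m - 1)) as [ip [Hip Hpmin]].
  destruct (min_index (fun i => - o i) (m - 1)) as [iq [Hiq Hqmax]].
  set (p := o ip). set (q := o iq).
  assert (Hbd : forall j, p <= o j <= q).
  { intros j. rewrite Hmod. pose proof (Nat.mod_upper_bound j m ltac:(lia)).
    split. apply Hpmin; lia. specialize (Hqmax (j mod m)%nat ltac:(lia)). cbv beta in Hqmax. unfold q. lra. }
  assert (HperO : forall i, Nat.iter m f (o i) = o i).
  { intros i. rewrite Hadd. unfold o. replace (m + i)%nat with (i + m * 1)%nat by lia.
    apply iter_period; auto. }
  assert (HbdO : forall i j, p <= Nat.iter j f (o i) <= q).
  { intros i j. rewrite Hadd. apply Hbd. }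
  assert (Hnoper : forall i k, (0 < k < m)%nat -> Nat.iter k f (o i) <> o i).
  { intros i k Hk E. apply (Hmin k Hk).
    assert (o k = x0); [|exact H].
    rewrite Hadd in E.
    transitivity (Nat.iter ((m - 1) * i) f (o (k + i)%nat)).
    - rewrite Hadd. unfold o. replace ((m - 1) * i + (k + i))%nat with (k + m * i)%nat by nia.
      rewrite iter_period; auto.
    - rewrite E, Hadd. unfold o. replace ((m - 1) * i + i)%nat with (0 + m * i)%nat by nia.
      rewrite iter_period; auto. }
  assert (HfO : forall i, f (o i) = o (S i)) by reflexivity.
  assert (I01p : 0 <= p) by (apply (iter_maps f x0 ip Hm HI)).
  assert (I01q : q <= 1) by (apply (iter_maps f x0 iq Hm HI)).
  assert (I01O : forall i, I01 (o i)) by (intros i; apply (iter_maps f x0 i Hm HI)).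
  assert (Hfp : f p <> p) by (apply (Hnoper ip 1%nat); lia).
  assert (Hfq : f q <> q) by (apply (Hnoper iq 1%nat); lia).
  assert (Hffp : f (f p) <> p) by (apply (Hnoper ip 2%nat); lia).
  set (p' := o (m - 1 + ip)%nat). set (q' := o (m - 1 + iq)%nat).
  assert (Hfp' : f p' = p).
  { unfold p', p. rewrite HfO. replace (S (m - 1 + ip)) with (ip + m * 1)%nat by lia.
    unfold o. apply iter_period; auto. }
  assert (Hfq' : f q' = q).
  { unfold q', q. rewrite HfO. replace (S (m - 1 + iq)) with (iq + m * 1)%nat by lia.
    unfold o. apply iter_period; auto. }
  assert (Hp'p : p' <> p) by (intros E; apply Hfp; rewrite <- E at 1; rewrite Hfp'; auto).
  assert (Hq'q : q' <> q) by (intros E; apply Hfq; rewrite <- E at 1; rewrite Hfq'; auto).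
  assert (Bp' : p <= p' <= q) by apply Hbd.
  assert (Bq' : p <= q' <= q) by apply Hbd.
  assert (Bfp : p <= f p <= q) by (unfold p; rewrite HfO; apply Hbd).
  assert (Bfq : p <= f q <= q) by (unfold q; rewrite HfO; apply Hbd).
  assert (Ip' : I01 p') by apply I01O.
  assert (Iq' : I01 q') by apply I01O.
  assert (Hcover : forall a b, a <= Rmin p' q' -> Rmax p' q' <= b ->
             forall w, p <= w <= q -> exists x, a <= x <= b /\ f x = w).
  { intros a b Ha Hb w Hw. destruct (ivt_f f p' q' w Hc Ip' Iq') as [x [Hx Hx']]. lra.
    exists x. split. lra. auto. }
  assert (Horb : forall s, (s = p' \/ s = q') -> exists i, s = o i).
  { intros s [->| ->]; eauto. }
  destruct (Req_dec (f p) q) as [Eq|Neq].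
  -
    assert (Hfqp : f q <> p) by (rewrite <- Eq; exact Hffp).
    assert (Hp'q : p' <> q) by (intros E; apply Hfqp; rewrite <- E; auto).
    set (s := Rmax p' q').
    assert (Hs : s = p' \/ s = q') by (unfold s, Rmax; destruct (Rle_dec p' q'); auto).
    destruct (Horb s Hs) as [is Eis].
    assert (Hsq : s < q) by (unfold s, Rmax; destruct (Rle_dec p' q'); lra).
    assert (Hps : p < s) by (unfold s, Rmax; destruct (Rle_dec p' q'); lra).
    apply (inst f m q s p q p s Hc Hm Ho ltac:(lia)).
    + apply HperO.
    + rewrite Eis. apply HperO.
    + lra.
    + exact I01p.
    + exact I01q.
    + apply HbdO.
    + rewrite Eis. apply HbdO.
    + intros [E1 E2]. unfold I01 in *.
      assert (p < f q < q) by lra.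
      unfold Rmin, Rmax in *. destruct (Rle_dec (f q) (f s)); lra.
    + lra.
    + exact Hps.
    + pose proof (I01O is). unfold I01 in *. lra.
    + apply Hcover. unfold s. unfold Rmin, Rmax; destruct (Rle_dec p' q'); lra. unfold s; lra.
    + intros x Hx1 Hx2. rewrite Rmin_right, Rmax_left in * by lra. left. lra.
  -
    assert (Hq'p : q' <> p) by (intros E; apply Neq; rewrite <- E; auto).
    set (s := Rmin p' q').
    assert (Hs : s = p' \/ s = q') by (unfold s, Rmin; destruct (Rle_dec p' q'); auto).
    destruct (Horb s Hs) as [is Eis].
    assert (Hsq : s < q) by (unfold s, Rmin; destruct (Rle_dec p' q'); lra).
    assert (Hps : p < s) by (unfold s, Rmin; destruct (Rle_dec p' q'); lra).
    apply (inst f m p s p q s q Hc Hm Ho ltac:(lia)).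
    + apply HperO.
    + rewrite Eis. apply HperO.
    + lra.
    + exact I01p.
    + exact I01q.
    + apply HbdO.
    + rewrite Eis. apply HbdO.
    + intros [E1 E2]. unfold I01 in *.
      assert (p < f p < q) by lra.
      unfold Rmin, Rmax in *. destruct (Rle_dec (f p) (f s)); lra.
    + lra.
    + exact Hsq.
    + exact I01q.
    + apply Hcover. unfold s; lra. unfold s. unfold Rmin, Rmax; destruct (Rle_dec p' q'); lra.
    + intros x Hx1 Hx2. rewrite Rmin_left, Rmax_right in * by lra. right. lra.
Qed.
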